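(* Let $Z\in\mathbb{R}^{n\times m}$ be fixed, $\theta^*\in\mathbb{R}^m$, and $\rho_\lambda:[0,\infty)\to[0,\infty)$ a regularizer. If $\operatorname{supp}(\theta^* )\subset S\subset U\subset[m]$, then $\mathcal{W}(Z,\theta^*;S)\subset\mathcal{W}(Z,\theta^*;U)$. In particular, for any random vector $\varepsilon\in\mathbb{R}^n$, the event $\{\varepsilon\in\mathcal{W}(Z,\theta^*;S)\}$ is contained in the event $\{\varepsilon\in\mathcal{W}(Z,\theta^*;U)\}$.
   Context: $\rho_\lambda(\theta)=\sum_i\rho_\lambda(|\theta_i|)$. For $y\in\mathbb{R}^n$ and $S\subset[m]$, $\mathcal{P}(y,Z;S)=\arg\min_{\theta\in\mathbb{R}^m,\ \operatorname{supp}(\theta)\subset S}\frac{1}{2n}\|y-Z\theta\|_2^2+\rho_\lambda(\theta)$ (the set of global minimizers). $\mathcal{W}(Z,\theta^*;S)=\{w\in\mathbb{R}^n:\exists\,\hat\theta\in\mathcal{P}(Z\theta^*+w,Z;S)\text{ with }\operatorname{supp}(\hat\theta)\neq\operatorname{supp}(\theta^* )\}$. *)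

(* Defs.v *)
From HB Require Import structures.
From mathcomp Require Import all_boot all_order all_algebra.
From mathcomp Require Import reals.
Set Implicit Arguments. Unset Strict Implicit. Unset Printing Implicit Defensive.
Import Order.TTheory GRing.Theory Num.Theory.
Local Open Scope ring_scope.

(* A regularizer rho_lambda : [0,oo) -> [0,oo), represented as a function
   R -> R of which only the values on [0,oo) matter.  Standing conventions: rho(0) = 0, rho >= 0, nondecreasing and lower
   semicontinuous on [0,oo). *)
Definition regularizer (R : realType) (rho : R -> R) : Prop :=
  [/\ rho 0 = 0,
      (forall t, 0 <= t -> 0 <= rho t),
      (forall s t, 0 <= s -> s <= t -> rho s <= rho t) &
      (forall t e, 0 <= t -> 0 < e ->
         exists2 d, 0 < d & forall s, 0 <= s -> `|s - t| < d -> rho t - e < rho s)].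

Definition supp (R : realType) (m : nat) (theta : 'cV[R]_m) : {set 'I_m} :=
  [set i | theta i ord0 != 0].

Definition penalty (R : realType) (rho : R -> R) (m : nat) (theta : 'cV[R]_m) : R :=
  \sum_(i < m) rho `|theta i ord0|.

Definition objective (R : realType) (rho : R -> R) (n m : nat)
    (y : 'cV[R]_n) (Z : 'M[R]_(n, m)) (theta : 'cV[R]_m) : R :=
  (2 * n%:R)^-1 * (\sum_(k < n) ((y - Z *m theta) k ord0) ^+ 2) + penalty rho theta.

Definition in_P (R : realType) (rho : R -> R) (n m : nat)
    (y : 'cV[R]_n) (Z : 'M[R]_(n, m)) (S : {set 'I_m}) (theta : 'cV[R]_m) : Prop :=
  supp theta \subset S /\
  forall theta' : 'cV[R]_m, supp theta' \subset S ->
    objective rho y Z theta <= objective rho y Z theta'.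

Definition in_W (R : realType) (rho : R -> R) (n m : nat)
    (Z : 'M[R]_(n, m)) (theta_star : 'cV[R]_m) (S : {set 'I_m}) (w : 'cV[R]_n) : Prop :=
  exists theta_hat : 'cV[R]_m,
    in_P rho (Z *m theta_star + w) Z S theta_hat /\ supp theta_hat != supp theta_star.

(* Main.v *)
Require Import Defs.
From HB Require Import structures.
From mathcomp Require Import all_boot all_order all_algebra.
From mathcomp Require Import reals.
From mathcomp Require Import boolp classical_sets topology normedtype derive.
From mathcomp Require Import lra finmap.
Import Order.TTheory GRing.Theory Num.Theory.
Import numFieldNormedType.Exports.
Local Open Scope ring_scope.

Section Gen.
Set Implicit Arguments. Unset Strict Implicit. Unset Printing Implicit Defensive.
Local Open Scope classical_set_scope.
Variable R : realType.

Definition lscat {T : topologicalType} (f : T -> R) (x : T) :=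
  forall e : R, 0 < e -> \forall y \near x, f x - e < f y.

Lemma cont_lsc {T : topologicalType} (f : T -> R) x :
  {for x, continuous f} -> lscat f x.
Proof.
move=> cf e e0.
have : \forall y \near x, `|f x - f y| < e by apply: cvgr_dist_lt.
apply: filterS => y; rewrite ltr_norml => /andP[h1 h2]; lra.
Qed.

Lemma lscD {T : topologicalType} (f g : T -> R) x :
  lscat f x -> lscat g x -> lscat (fun y => f y + g y) x.
Proof.
move=> hf hg e e0; have e20 : 0 < e / 2 by rewrite divr_gt0.
by apply: filterS2 (hf _ e20) (hg _ e20) => y h1 h2 /=; lra.
Qed.

Lemma lsc_sum {T : topologicalType} (I : Type) (s : seq I) (g : I -> T -> R) x :
  (forall i, lscat (g i) x) -> lscat (fun y => \sum_(i <- s) g i y) x.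
Proof.
elim: s => [|i s IH] H.
  by move=> e e0; apply: nearW => y; rewrite !big_nil; lra.
move=> e e0; have := lscD (H i) (IH H) e0.
by apply: filterS => y; rewrite !big_cons.
Qed.

Lemma seq_pos (s : seq R) (m : R) : (forall r, r \in s -> m < r) ->
  exists2 d, 0 < d & forall r, r \in s -> m + d <= r.
Proof.
elim: s => [|a s IH] H; first by exists 1.
have [|d d0 Hd] := IH; first by move=> r rs; apply: H; rewrite inE rs orbT.
have ma : m < a by apply: H; rewrite inE eqxx.
exists (Num.min d (a - m)); first by rewrite lt_min d0 subr_gt0.
move=> r; rewrite inE => /orP[/eqP->|rs].
  have : Num.min d (a - m) <= a - m by rewrite ge_min lexx orbT.
  lra.
have : Num.min d (a - m) <= d by rewrite ge_min lexx.
have := Hd r rs; lra.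
Qed.

Lemma seq_argmin (I : eqType) (f : I -> R) (s : seq I) : s != [::] ->
  exists2 i, i \in s & forall j, j \in s -> f i <= f j.
Proof.
elim: s => [//|a s IH] _.
have [->|sne] := eqVneq s [::].
  by exists a; rewrite ?inE ?eqxx // => j; rewrite inE => /eqP->.
have [i is_ Hi] := IH sne.
have [fa|fa] := leP (f a) (f i).
  exists a; first by rewrite inE eqxx.
  move=> j; rewrite inE => /orP[/eqP->//|js]; exact: le_trans fa (Hi j js).
exists i; first by rewrite inE is_ orbT.
move=> j; rewrite inE => /orP[/eqP->|js]; [exact: ltW | exact: Hi].
Qed.

Lemma lsc_min {T : ptopologicalType} (f : T -> R) (A : set T) :
  A !=set0 -> compact A -> (forall x, A x -> lscat f x) ->
  (forall x, A x -> 0 <= f x) ->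
  exists2 c, A c & forall t, A t -> f c <= f t.
Proof.
move=> [a Aa] cA lf f0.
set E := f @` A.
have hE : has_inf E.
  split; first by exists (f a); exists a.
  by exists 0 => _ [x Ax <-]; exact: f0.
have mle x : A x -> inf E <= f x by move=> Ax; apply: (ge_inf hE.2); exists x.
case: (pselect (exists2 c, A c & forall t, A t -> f c <= f t)) => // nomin.
exfalso.
have lt x : A x -> inf E < f x.
  move=> Ax; rewrite lt_neqAle mle // andbT; apply/negP => /eqP e.
  by apply: nomin; exists x => // t At; rewrite -e; exact: mle.
rewrite compact_cover in cA.
have cov0 : A `<=` cover [set r | inf E < r] (fun r => interior [set y | r < f y]).
  move=> x Ax; exists ((inf E + f x) / 2); first by have := lt x Ax; rewrite /=; lra.
  have h0 : 0 < (f x - inf E) / 2 by have := lt x Ax; lra.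
  rewrite /interior /=; have := lf x Ax _ h0; apply: filterS => y /=; lra.
have [D' sD' cov] := cA R [set r | inf E < r]
   (fun r => interior [set y | r < f y]) (fun r _ => @open_interior _ _) cov0.
have [|d d0 Hd] := @seq_pos (enum_fset D') (inf E).
  by move=> r rD; have := sD' r rD; rewrite in_setE.
have [_ [t At <-] ft] := inf_adherent d0 hE.
have [r rD /interior_subset /= rt] := cov t At.
have := Hd r rD; lra.
Qed.

End Gen.

Section Exist.
Set Implicit Arguments. Unset Strict Implicit. Unset Printing Implicit Defensive.
Local Open Scope classical_set_scope.
Variables (R : realType) (rho : R -> R) (n m : nat) (Z : 'M[R]_(n, m)) (y : 'cV[R]_n).
Hypothesis hrho : regularizer rho.

Definition L k (x : 'rV[R]_m) := \sum_(j < m) Z k j * x ord0 j.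
Definition G (x : 'rV[R]_m) := objective rho y Z x^T.
Definition cc : R := (2 * n%:R)^-1.

Lemma GE x : G x = cc * \sum_(k < n) (y k ord0 - L k x) ^+ 2 +
                   \sum_(i < m) rho `|x ord0 i|.
Proof.
rewrite /G /objective /penalty /cc; congr (_ * _ + _).
  apply: eq_bigr => k _; rewrite !mxE; congr ((_ - _) ^+ 2).
  by apply: eq_bigr => j _; rewrite !mxE.
by apply: eq_bigr => i _; rewrite mxE.
Qed.

Lemma L_cont k : continuous (L k).
Proof.
rewrite /L; apply: continuous_big; first exact: pseudometric_normed_Zmodule.add_continuous.
move=> j _ x.
have h := @cvgM _ _ _ _ (fun=> Z k j) (fun x0 : 'rV[R]_m => x0 ord0 j) _ _ (cvg_cst (Z k j)) (@coord_continuous R 1 m ord0 j x). exact: h.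
Qed.

Lemma G_lsc x : lscat G x.
Proof.
have -> : G = fun x => cc * \sum_(k < n) (y k ord0 - L k x) ^+ 2 +
                   \sum_(i < m) rho `|x ord0 i|.
  by apply: funext => z; rewrite GE.
have hq : continuous (fun x : 'rV[R]_m => \sum_(k < n) (y k ord0 - L k x) ^+ 2).
  apply: continuous_big; first exact: pseudometric_normed_Zmodule.add_continuous.
  move=> k _ z.
  have h : (fun x => y k ord0 - L k x) @ z --> (y k ord0 - L k z).
    exact: (cvgB (cvg_cst _) (@L_cont k z)).
  have h2 := cvgM h h.
  exact: h2.
apply: lscD.
  apply: cont_lsc.
  have h := @cvgM _ _ _ _ (fun=> cc) (fun x : 'rV[R]_m => \sum_(k < n) (y k ord0 - L k x) ^+ 2) _ _ (cvg_cst cc) (hq x).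
  exact: h.
apply: lsc_sum => i e e0.
case: hrho => _ _ _ hl.
have [d d0 Hd] := hl `|x ord0 i| e (normr_ge0 _) e0.
have hc := @coord_continuous R 1 m ord0 i x.
have := @cvgr_dist_lt _ _ _ _ _ (fun z : 'rV[R]_m => z ord0 i) (x ord0 i) hc d d0.
move/(_ (nbhs_filter x)); apply: filterS => z /= hz; apply: Hd => //.
by apply: le_lt_trans (ler_dist_dist _ _) _; rewrite distrC.
Qed.


Definition hh (x : 'rV[R]_m) := \sum_(k < n) `|L k x|.

Lemma hh_ge0 x : 0 <= hh x.
Proof. by apply: sumr_ge0 => k _. Qed.

Lemma hh_cont : continuous hh.
Proof.
rewrite /hh; apply: continuous_big; first exact: pseudometric_normed_Zmodule.add_continuous.
move=> k _ z.
exact: (cvg_norm (@L_cont k z)).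
Qed.

Lemma L_scale k s x : L k (s *: x) = s * L k x.
Proof.
rewrite /L mulr_sumr; apply: eq_bigr => j _; rewrite mxE.
by rewrite mulrCA.
Qed.

Lemma hh_scale s x : hh (s *: x) = `|s| * hh x.
Proof.
rewrite /hh mulr_sumr; apply: eq_bigr => k _.
by rewrite L_scale normrM.
Qed.

Lemma L_sub k x d t : L k (x - t *: d) = L k x - t * L k d.
Proof.
rewrite /L mulr_sumr -sumrB; apply: eq_bigr => j _; rewrite !mxE.
by rewrite mulrBr mulrCA.
Qed.

Definition sg (σ : 'I_m -> bool) i : R := if σ i then 1 else -1.

Definition Cone (T : {set 'I_m}) (σ : 'I_m -> bool) (x : 'rV[R]_m) :=
  (forall i, i \notin T -> x ord0 i = 0) /\ (forall i, 0 <= sg σ i * x ord0 i).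

Definition Box (lo hi : 'I_m -> R) :=
  [set v : 'rV[R]_m | forall i, `[lo i, hi i]%classic (v ord0 i)].

Lemma Box_compact lo hi : compact (Box lo hi).
Proof. exact: (@rV_compact R m (fun i => `[lo i, hi i]%classic) (fun i => @segment_compact R _ _)). Qed.

Lemma BoxP lo hi v : Box lo hi v <-> forall i, lo i <= v ord0 i <= hi i.
Proof.
rewrite /Box /=; split => H i; have := H i; by rewrite /= in_itv.
Qed.

Lemma sg_abs σ i a : 0 <= sg σ i * a -> `|a| = sg σ i * a.
Proof.
rewrite /sg; case: (σ i); rewrite ?mul1r ?mulN1r => h.
  exact: ger0_norm.
by rewrite ler0_norm //; rewrite oppr_ge0 in h.
Qed.

Lemma divBox (a b l u : R) : 0 < a -> l * a <= b -> b <= u * a -> l <= b / a <= u.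
Proof. by move=> a0 h1 h2; rewrite ler_pdivlMr // ler_pdivrMr // h1 h2. Qed.

Lemma coerc_i T σ i :
  (forall d, Cone T σ d -> (forall k, L k d = 0) -> d = 0) ->
  exists2 e, 0 < e & forall x, Cone T σ x ->
    (forall j, `|x ord0 j| <= `|x ord0 i|) -> e * `|x ord0 i| <= hh x.
Proof.
move=> nock.
case: (boolP (i \in T)) => iT; last first.
  by exists 1 => // x [xT _] _; rewrite xT // normr0 mulr0; exact: hh_ge0.
pose lo j := if j == i then sg σ i else if (j \in T) && ~~ σ j then -1 else 0.
pose hi j := if j == i then sg σ i else if (j \in T) && σ j then 1 else 0.
have ne : Box lo hi !=set0.
  exists (\row_j (if j == i then sg σ i else 0)); apply/BoxP => j; rewrite mxE /lo /hi.
  case: eqP => _; first by rewrite lexx.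
  by case: (j \in T); case: (σ j) => /=; rewrite ?lexx ?ler01 ?lerN10.
have [c cB cmin] := compact_EVT_min ne (@Box_compact lo hi) (continuous_subspaceT hh_cont).
move: cB; rewrite in_setE => /BoxP cB.
have cC : Cone T σ c.
  split => j.
    move=> jT; have := cB j; rewrite /lo /hi.
    have -> : (j == i) = false by apply/eqP => ji; rewrite ji iT in jT.
    by rewrite (negbTE jT) /= => /andP[h1 h2]; apply/le_anti; rewrite h1 h2.
  have := cB j; rewrite /lo /hi /sg.
  case: (j =P i) => [->|_]; first by case: (σ i) => /andP[h1 h2]; lra.
  by case: (j \in T); case: (σ j) => /= /andP[h1 h2]; lra.
have ci : c ord0 i = sg σ i.
  by have := cB i; rewrite /lo /hi eqxx => /andP[h1 h2]; apply/le_anti; rewrite h1 h2.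
have [k Lk] : exists k, L k c != 0.
  case: (pselect (exists k, L k c != 0)) => // nk; exfalso.
  have c0 : c = 0.
    apply: nock => // k; apply/eqP; case: eqP => // /eqP hk.
    by exfalso; apply: nk; exists k.
  by move: ci; rewrite c0 mxE /sg; case: (σ i) => /esym/eqP; rewrite ?oppr_eq0 oner_eq0.
have e0 : 0 < hh c.
  have h1 : `|L k c| <= hh c by rewrite /hh (bigD1 k) //= lerDl sumr_ge0.
  have h2 : 0 < `|L k c| by rewrite normr_gt0.
  exact: lt_le_trans h2 h1.
exists (hh c) => // x xC xdom.
have [xi0|xi0] := eqVneq (x ord0 i) 0.
  by rewrite xi0 normr0 mulr0 hh_ge0.
set a := `|x ord0 i|.
have a0 : 0 < a by rewrite normr_gt0.
have xB : Box lo hi (a^-1 *: x).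
  apply/BoxP => j; rewrite mxE mulrC.
  have hx := (proj2 xC) j; have hd := xdom j.
  have ha := sg_abs hx.
  rewrite /lo /hi.
  case: (j =P i) => [->|_].
    rewrite -/a; move: (sg_abs ((proj2 xC) i)); rewrite -/a /sg; case: (σ i) => ->.
      by rewrite mul1r mulfV ?lexx // gt_eqF.
    by rewrite mulN1r invrN mulrN mulfV // lexx.
  case: (boolP (j \in T)) => jT /=; last first.
    by rewrite ((proj1 xC) j jT) mul0r lexx.
  apply: divBox => //; move: hx ha hd; rewrite -/a /sg; case: (σ j) => /= hx ha hd; lra.
have := cmin (a^-1 *: x); rewrite !in_setE => /(_ xB).
rewrite hh_scale normfV normr_id -/a ler_pdivlMl //.
by rewrite mulrC.
Qed.

Lemma fin_eps (I : finType) (P : I -> R -> Prop) :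
  (forall i e e', 0 < e' -> e' <= e -> P i e -> P i e') ->
  (forall i, exists2 e, 0 < e & P i e) -> exists2 e, 0 < e & forall i, P i e.
Proof.
move=> mono H.
have H' : forall i, exists e, 0 < e /\ P i e.
  by move=> i; case: (H i) => e h1 h2; exists e.
have [f Hf] := choice H'.
have [i0 _|I0] := pickP (fun _ : I => true); last first.
  by exists 1 => // i; have := I0 i.
have [|j _ Hj] := @seq_argmin _ _ f (enum I).
  by apply/eqP => h; have := mem_enum I i0; rewrite h.
exists (f j); first by case: (Hf j).
move=> i; apply: (mono i (f i)); first by case: (Hf j).
  by apply: Hj; rewrite mem_enum.
by case: (Hf i).
Qed.

Lemma coerc T σ :
  (forall d, Cone T σ d -> (forall k, L k d = 0) -> d = 0) ->
  exists2 e, 0 < e & forall x, Cone T σ x -> forall j, e * `|x ord0 j| <= hh x.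
Proof.
move=> nock.
have [e e0 He] := @fin_eps _ (fun i e => forall x, Cone T σ x ->
    (forall j, `|x ord0 j| <= `|x ord0 i|) -> e * `|x ord0 i| <= hh x)
  (fun i e e' e'0 le h x xC xd => le_trans (ler_wpM2r (normr_ge0 _) le) (h x xC xd))
  (fun i => coerc_i i nock).
exists e => // x xC j.
have [|i _ Hi] := @seq_argmin _ _ (fun i => - `|x ord0 i|) (enum 'I_m).
  by apply/eqP => h; have := mem_enum 'I_m j; rewrite h.
have dom : forall j, `|x ord0 j| <= `|x ord0 i|.
  by move=> j'; have := Hi j' (mem_enum _ _); rewrite lerN2.
apply: le_trans (He i x xC dom).
by rewrite ler_wpM2l ?(ltW e0) // dom.
Qed.

Lemma cc_ge0 : 0 <= cc.
Proof. by rewrite /cc invr_ge0 mulr_ge0 // ler0n. Qed.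

Lemma G_ge0 x : 0 <= G x.
Proof.
rewrite GE; apply: addr_ge0.
  by apply: mulr_ge0; [exact: cc_ge0 | apply: sumr_ge0 => k _; exact: sqr_ge0].
apply: sumr_ge0 => i _; case: hrho => _ h _ _; exact: h.
Qed.

Definition YY := \sum_(k < n) (y k ord0) ^+ 2.

Lemma G0 : G 0 = cc * YY.
Proof.
rewrite GE /YY [X in _ + X]big1 ?addr0; last first.
  by move=> i _; rewrite mxE normr0; case: hrho.
congr (_ * _); apply: eq_bigr => k _.
by rewrite /L big1 ?subr0 // => j _; rewrite mxE mulr0.
Qed.

Lemma sq_bound (a b : R) : a ^+ 2 <= b -> `|a| <= b + 1.
Proof.
move=> h; have h1 : `|a| ^+ 2 = a ^+ 2 by rewrite real_normK // num_real.
have h2 := normr_ge0 a.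
rewrite -h1 in h; nra.
Qed.

Definition BB := \sum_(k < n) (`|y k ord0| + YY + 1).

Lemma bound (n0 : (0 < n)%N) x : G x <= G 0 -> hh x <= BB.
Proof.
move=> hx.
have c0 : 0 < cc by rewrite /cc invr_gt0 mulr_gt0 // ltr0n.
have hQ : \sum_(k < n) (y k ord0 - L k x) ^+ 2 <= YY.
  move: hx; rewrite G0 GE => hx.
  have hp : 0 <= \sum_(i < m) rho `|x ord0 i|.
    by apply: sumr_ge0 => i _; case: hrho => _ h _ _; exact: h.
  rewrite -(ler_pM2l c0); lra.
rewrite /hh /BB; apply: ler_sum => k _.
have hk : (y k ord0 - L k x) ^+ 2 <= YY.
  apply: le_trans hQ; rewrite (bigD1 k) //= lerDl.
  by apply: sumr_ge0 => i _; exact: sqr_ge0.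
have := sq_bound hk.
have : `|L k x| <= `|y k ord0| + `|y k ord0 - L k x|.
  by have := ler_normB (y k ord0) (y k ord0 - L k x); rewrite opprB addrC subrK.
lra.
Qed.

Definition clo (T : {set 'I_m}) (σ : 'I_m -> bool) (r : R) j :=
  if (j \in T) && ~~ σ j then - r else 0.
Definition chi (T : {set 'I_m}) (σ : 'I_m -> bool) (r : R) j :=
  if (j \in T) && σ j then r else 0.

Lemma Box_Cone T σ r x : Box (clo T σ r) (chi T σ r) x -> Cone T σ x.
Proof.
move/BoxP => H; split => j.
  by move=> jT; have := H j; rewrite /clo /chi (negbTE jT) /= => /andP[h1 h2]; apply/le_anti; rewrite h1 h2.
have := H j; rewrite /clo /chi /sg.
by case: (j \in T); case: (σ j) => /= /andP[h1 h2]; lra.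
Qed.

Lemma Cone_Box T σ r x : Cone T σ x -> (forall j, `|x ord0 j| <= r) ->
  Box (clo T σ r) (chi T σ r) x.
Proof.
move=> [xT xs] xr; apply/BoxP => j.
case: (boolP (j \in T)) => jT; last by rewrite /clo /chi (negbTE jT) /= xT // lexx.
have := xs j; have := xr j; have := sg_abs (xs j).
rewrite /clo /chi /sg jT; case: (σ j) => /= h1 h2 h3; lra.
Qed.

Definition Emin T σ := exists2 mu, Cone T σ mu & forall x, Cone T σ x -> G mu <= G x.

Lemma step (n0 : (0 < n)%N) (T : {set 'I_m}) (σ : 'I_m -> bool) :
  (forall T' : {set 'I_m}, (#|T'| < #|T|)%N -> forall σ', Emin T' σ') -> Emin T σ.
Proof.
move=> IH.
case: (pselect (exists d, [/\ Cone T σ d, (forall k, L k d = 0) & d != 0]))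
  => [[d [dC dL dn0]]|nock]; last first.
  have nock' : forall d, Cone T σ d -> (forall k, L k d = 0) -> d = 0.
    move=> d dC dL; apply: contrapT => dn; apply: nock; exists d; split => //.
    exact/eqP.
  have [e e0 He] := coerc nock'.
  have B0 : 0 <= BB by apply: sumr_ge0 => k _; rewrite addr_ge0 // addr_ge0 // sumr_ge0 // => i _; exact: sqr_ge0.
  set r := BB / e.
  have r0 : 0 <= r by rewrite divr_ge0 // ltW.
  have z0 : Box (clo T σ r) (chi T σ r) 0.
    apply: Cone_Box => [|j]; last by rewrite mxE normr0.
    by split => j; rewrite mxE // mulr0.
  have [mu muB mumin] := lsc_min (ex_intro _ 0 z0) (@Box_compact _ _)
     (fun x _ => G_lsc x) (fun x _ => G_ge0 x).
  exists mu; first exact: Box_Cone muB.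
  move=> x xC; case: (leP (G x) (G 0)) => hx.
    apply: mumin; apply: Cone_Box => // j.
    have := le_trans (He x xC j) (bound n0 hx).
    by rewrite /r ler_pdivlMr // mulrC.
  exact: le_trans (mumin 0 z0) (ltW hx).
have [j0 dj0] : exists j, d ord0 j != 0.
  case: (pselect (exists j, d ord0 j != 0)) => // nj; exfalso.
  move/eqP: dn0; apply; apply/rowP => j; rewrite mxE.
  by apply/eqP; case: eqP => // /eqP hj; exfalso; apply: nj; exists j.
set s := [seq j <- enum 'I_m | d ord0 j != 0].
have sP j : (j \in s) = (d ord0 j != 0) by rewrite mem_filter mem_enum andbT.
have sne : s != [::] by apply/eqP => h; have := sP j0; rewrite h dj0.
have sT j : j \in s -> j \in T.
  rewrite sP => hj; apply: contraR hj => jT; apply/eqP; exact: (proj1 dC j jT).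
have H : forall j, exists mu, j \in T -> Cone (T :\ j) σ mu /\
    forall x, Cone (T :\ j) σ x -> G mu <= G x.
  move=> j; case: (boolP (j \in T)) => jT; last by exists 0.
  have [|mu h1 h2] := IH (T :\ j) _ σ.
    by rewrite (cardsD1 j T) jT.
  by exists mu.
have [mu Hmu] := choice H.
have [js jsin jsmin] := @seq_argmin _ _ (fun j => G (mu j)) s sne.
have [muC mumin] := Hmu js (sT _ jsin).
exists (mu js).
  split; last exact: (proj2 muC).
  move=> i iT; apply: (proj1 muC); rewrite in_setD1 negb_and iT orbT //.
move=> x xC.
have [j jin jm] := @seq_argmin _ _ (fun j => x ord0 j / d ord0 j) s sne.
set t := x ord0 j / d ord0 j.
have dj : d ord0 j != 0 by rewrite -sP.
have t0 : 0 <= t.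
  have := (proj2 xC) j; have := (proj2 dC) j; rewrite /t /sg.
  case: (σ j); rewrite ?mul1r ?mulN1r => h1 h2.
    by rewrite divr_ge0.
  by rewrite -mulrNN -invrN divr_ge0.
set x' := x - t *: d.
have x'i i : x' ord0 i = x ord0 i - t * d ord0 i by rewrite !mxE.
have x'sg i : 0 <= sg σ i * x' ord0 i.
  rewrite x'i; have hx := (proj2 xC) i; have hd := (proj2 dC) i.
  have [di0|di0] := eqVneq (d ord0 i) 0.
    by rewrite di0 mulr0 subr0.
  have ti : t <= x ord0 i / d ord0 i by apply: jm; rewrite sP.
  have -> : sg σ i * (x ord0 i - t * d ord0 i) =
      (sg σ i * d ord0 i) * (x ord0 i / d ord0 i - t).
    rewrite mulrBr mulrBr -!mulrA (mulrCA (d ord0 i)) mulfV // mulr1 /t.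
    by congr (_ - _ * _); rewrite mulrA mulrC.
  by apply: mulr_ge0 => //; rewrite subr_ge0.
have x'C : Cone (T :\ j) σ x'.
  split => // i; rewrite in_setD1 negb_and negbK => /orP[/eqP->|iT].
    by rewrite x'i /t divfK // subrr.
  by rewrite x'i (proj1 xC) // (proj1 dC) // mulr0 subrr.
have Gx' : G x' <= G x.
  rewrite !GE; apply: lerD.
    rewrite le_eqVlt; apply/orP; left; apply/eqP; congr (_ * _).
    by apply: eq_bigr => k _; rewrite /x' L_sub dL mulr0 subr0.
  apply: ler_sum => i _; case: hrho => _ _ hm _; apply: hm => //.
  rewrite (sg_abs (x'sg i)) (sg_abs ((proj2 xC) i)) x'i.
  have := mulr_ge0 t0 ((proj2 dC) i); nra.
apply: le_trans (jsmin j jin) _.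
apply: le_trans Gx'.
by have [_ hmin] := Hmu j (sT _ jin); apply: hmin.
Qed.

Lemma exist_cone (n0 : (0 < n)%N) (T : {set 'I_m}) (σ : 'I_m -> bool) : Emin T σ.
Proof.
have : forall k (T : {set 'I_m}), (#|T| <= k)%N -> forall σ, Emin T σ.
  elim=> [|k IH] T' hT σ'; apply: step => // T'' hT'' σ''.
    by move: hT''; rewrite ltnNge (leq_trans hT (leq0n _)).
  by apply: IH; rewrite -ltnS (leq_trans hT'' hT).
by move/(_ #|T| T (leqnn _)).
Qed.

Lemma exist_U (U : {set 'I_m}) : exists2 mu : 'rV[R]_m,
  (forall i, i \notin U -> mu ord0 i = 0) &
  forall x : 'rV[R]_m, (forall i, i \notin U -> x ord0 i = 0) -> G mu <= G x.
Proof.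
case: (posnP n) => [n0|n0].
  exists (0 : 'rV[R]_m) => [i _|x _]; first by rewrite mxE.
  rewrite G0 /YY big1 ?mulr0 ?G_ge0 //.
  move=> k _; move: (ltn_ord k); rewrite {2}n0 //.
have H : forall σ : {ffun 'I_m -> bool}, exists mu, Cone U σ mu /\
   forall x, Cone U σ x -> G mu <= G x.
  by move=> σ; have [mu h1 h2] := exist_cone n0 U σ; exists mu.
have [f Hf] := choice H.
have [|σs _ σmin] := @seq_argmin _ _ (fun σ => G (f σ)) (enum {ffun 'I_m -> bool}).
  by apply/eqP => h; have := mem_enum {ffun 'I_m -> bool} [ffun=> true]; rewrite h.
have [fC fmin] := Hf σs.
exists (f σs); first exact: (proj1 fC).
move=> x xU.
pose σx : {ffun 'I_m -> bool} := [ffun i => 0 <= x ord0 i].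
have xC : Cone U σx x.
  split => // i; rewrite /sg ffunE; case: ifP => h; first by rewrite mul1r.
  by rewrite mulN1r oppr_ge0; apply: ltW; rewrite ltNge h.
apply: le_trans (σmin σx (mem_enum _ _)) _.
by have [_ h] := Hf σx; apply: h.
Qed.

Lemma exist_P (U : {set 'I_m}) : exists theta, in_P rho y Z U theta.
Proof.
have [mu muU mumin] := exist_U U.
exists mu^T; split.
  apply/fintype.subsetP => i; rewrite /supp inE mxE; apply: contraR => iU.
  by rewrite muU.
move=> th hth.
have := mumin th^T; rewrite /G trmxK; apply => i iU.
rewrite mxE; apply/eqP; apply: contraR iU => hi.
by apply: (fintype.subsetP hth); rewrite /supp inE.
Qed.

End Exist.

Theorem lemma6 (R : realType) (n m : nat) (Z : 'M[R]_(n, m))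
    (theta_star : 'cV[R]_m) (rho : R -> R) (S U : {set 'I_m}) :
  regularizer rho ->
  supp theta_star \subset S -> S \subset U ->
  (forall w : 'cV[R]_n, in_W rho Z theta_star S w -> in_W rho Z theta_star U w) /\
  (forall (Omega : Type) (eps : Omega -> 'cV[R]_n) (omega : Omega),
      in_W rho Z theta_star S (eps omega) -> in_W rho Z theta_star U (eps omega)).
Proof.
move=> hrho hS hSU.
have main : forall w, in_W rho Z theta_star S w -> in_W rho Z theta_star U w.
  move=> w [thS [[suppS minS] neq]].
  have [thU [suppU minU]] := @exist_P R rho n m Z (Z *m theta_star + w) hrho U.
  case: (eqVneq (supp thU) (supp theta_star)) => e.
    exists thS; split => //; split; first exact: fintype.subset_trans suppS hSU.
    move=> th' h'; apply: le_trans (minU th' h').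
    by apply: minS; rewrite e.
  by exists thU.
by split => // Omega eps omega; exact: main.
Qed.
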